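(* Let $N,M$ be integers with $0<M<N/2$. Let $\mathbf{Str}_{00}$ (resp. $\mathbf{Str}_{11}$) be the sub-poset of $\mathbf{Str}(N,M)$ of strings $s$ with $s_1=s_N=0$ (resp. $s_1=s_N=1$), and let $\overline{\mathbf{Str}}_{00}$ (resp. $\overline{\mathbf{Str}}_{11}$) be the sub-poset of strings with $(s_1,s_N)\in\{(0,0),(0,X),(X,0)\}$ (resp. $(s_1,s_N)\in\{(1,1),(1,X),(X,1)\}$). Then the geometric realizations of $\mathbf{Str}_{00}$, $\overline{\mathbf{Str}}_{00}$, $\mathbf{Str}_{11}$ and $\overline{\mathbf{Str}}_{11}$ are contractible.
   Context: A circular symbol string of length $N$ is $s=s_1\cdots s_N$ with each $s_i\in\{0,1,X\}$, indices read cyclically modulo $N$; $0,1$ are called bits. A block of $s$ is a maximal cyclic run of consecutive equal symbols. $s$ is a circular cellular string of rank $M$ if it has exactly $M$ blocks of symbol $0$, exactly $M$ blocks of symbol $1$, and every block of symbol $X$ is cyclically preceded and followed by blocks of different bits (one of symbol $0$ and one of symbol $1$). $\mathbf{Str}(N,M)$ is the set of such strings, partially ordered by $s'<s$ iff $s$ is obtained from $s'$ by replacing some (at least one) of the bits of $s'$ by $X$. The geometric realization of a poset is that of its order complex. *)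

(* Defs.v *)
From HB Require Import structures.
From mathcomp Require Import all_boot all_order all_algebra.
From mathcomp Require Import all_classical all_reals all_analysis.

Set Implicit Arguments.
Unset Strict Implicit.
Unset Printing Implicit Defensive.

Import Order.TTheory GRing.Theory Num.Theory.
Import numFieldNormedType.Exports.

Inductive sym := S0 | S1 | SX.

Definition sym_code (a : sym) : 'I_3 :=
  match a with
  | S0 => @Ordinal 3 0 isT | S1 => @Ordinal 3 1 isT | SX => @Ordinal 3 2 isT end.
Definition sym_decode (i : 'I_3) : sym :=
  match val i with 0 => S0 | 1 => S1 | _ => SX end.
Lemma sym_codeK : cancel sym_code sym_decode.
Proof. by case. Qed.
HB.instance Definition _ := Equality.copy sym (can_type sym_codeK).
HB.instance Definition _ := Finite.copy sym (can_type sym_codeK).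

Definition is_bit (a : sym) : bool := a != SX.

Section Strings.
Variable N : nat.
Implicit Types s : N.-tuple sym.

(* cyclic access, positions numbered 0..N-1 (paper's s_1 .. s_N) *)
Definition cyc s (k : nat) : sym := nth SX s (k %% N).

(* number of blocks (maximal cyclic runs) of symbol a: the whole string if it
   is constant equal to a, otherwise the number of positions where a run of a
   starts (s_i = a and s_{i-1} <> a cyclically) *)
Definition nblocks (a : sym) s : nat :=
  if (0 < N) && all (fun c => c == a) s then 1
  else count (fun i => (cyc s i == a) && (cyc s (i + N - 1) != a)) (iota 0 N).

Definition xblock s (i len : nat) : bool :=
  [&& cyc s (i + N - 1) != SX, all (fun k => cyc s (i + k) == SX) (iota 0 len)
    & cyc s (i + len) != SX].

(* every X-block is cyclically preceded and followed by blocks of different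
   bits (in particular the string is not entirely made of X's) *)
Definition xblocks_ok s : bool :=
  has is_bit s &&
  all (fun i => all (fun len => xblock s i len ==>
                      (cyc s (i + N - 1) != cyc s (i + len))) (iota 1 N))
      (iota 0 N).

Definition is_Str (M : nat) s : bool :=
  [&& nblocks S0 s == M, nblocks S1 s == M & xblocks_ok s].

Definition str_le (s' s : N.-tuple sym) : bool :=
  [forall i : 'I_N, (tnth s' i == tnth s i) || (is_bit (tnth s' i) && (tnth s i == SX))].

Definition sfirst s : sym := nth SX s 0.
Definition slast s : sym := nth SX s N.-1.

Definition Str00 M s : bool := [&& is_Str M s, sfirst s == S0 & slast s == S0].
Definition Str11 M s : bool := [&& is_Str M s, sfirst s == S1 & slast s == S1].
Definition Str00bar M s : bool :=
  is_Str M s && ((sfirst s, slast s) \in [:: (S0, S0); (S0, SX); (SX, S0)]).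
Definition Str11bar M s : bool :=
  is_Str M s && ((sfirst s, slast s) \in [:: (S1, S1); (S1, SX); (SX, S1)]).
End Strings.

Local Open Scope classical_set_scope.
Local Open Scope ring_scope.

(* The geometric realization of the order complex of the finite poset
   (Q, le), Q a subset of a finite type T: points are barycentric coordinate
   functions x : T -> R, nonnegative, summing to 1, supported in Q, whose
   support is a chain of (Q, le). *)
Definition realization (R : realType) (T : finType) (Q : pred T) (le : rel T)
  : set (prod_topology (fun _ : T => (R : topologicalType))) :=
  [set x | (forall t, 0 <= x t) /\ (forall t, ~~ Q t -> x t = 0) /\
           \sum_(t : T) x t = 1 /\
           (forall t u, x t != 0 -> x u != 0 -> le t u || le u t)].

Definition contractible (R : realType) (X : topologicalType) (A : set X) : Prop :=
  exists x0, A x0 /\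
  exists H : X * R -> X,
    {within A `*` `[0, 1], continuous H} /\
    (forall x t, A x -> 0 <= t <= 1 -> A (H (x, t))) /\
    (forall x, A x -> H (x, 0) = x /\ H (x, 1) = x0).

(* Main.v *)
Require Import Defs.
From mathcomp Require Import all_boot all_order all_algebra.
From mathcomp Require Import all_classical all_reals all_analysis.
From mathcomp Require Import lra.
From mathcomp Require Import zify.
Import Order.TTheory GRing.Theory Num.Theory.
Import numFieldNormedType.Exports.

Module CombM.
Local Set Implicit Arguments.
Local Unset Strict Implicit.

Lemma sym_neq : ((S0 == S1) = false) * ((S1 == S0) = false) * ((S0 == SX) = false) * ((SX == S0) = false) * ((S1 == SX) = false) * ((SX == S1) = false).
Proof. by []. Qed.

Ltac fin := rewrite ?eqxx ?sym_neq; first [ by [] | (apply/esym/eqP; lia) | (apply/esym/negbTE/negP => /eqP; lia) | lia ].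

Definition dstep a a' := [&& a <= a', a' <= a + 2 & (a %% 2 == 1) ==> (a' <= a + 1)].
Definition compat a c := (c %% 2 == 1) || (a %% 4 == c %% 4).
Definition dlo a c := c <= a + (c %% 2).
Definition dhi a c := a <= c + (c %% 2).
Definition drel a c := (a == c) || ((c %% 2 == 1) && ((a == c.+1) || (a.+1 == c))).

Lemma step_lo a a' c c' : dstep a a' -> dstep c c' -> compat a' c' -> dlo a c -> dlo a' c'.
Proof. rewrite /dstep /compat /dlo; lia. Qed.
Lemma step_hi a a' c c' : dstep a a' -> dstep c c' -> compat a c -> dhi a' c' -> dhi a c.
Proof. rewrite /dstep /compat /dhi; lia. Qed.
Lemma lohi_rel a c : dlo a c -> dhi a c -> compat a c -> drel a c.
Proof. rewrite /drel /compat /dlo /dhi; lia. Qed.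
Lemma rel_max a c e : drel a c -> compat (maxn a e) (maxn c e).
Proof. rewrite /drel /compat; lia. Qed.
Lemma cmp_even a i m : m %% 2 = 0 -> compat (maxn a (minn (2*i) m)) (maxn a (minn (2*i) m.+1)).
Proof. rewrite /compat; lia. Qed.
Lemma cmp_odd a i m : m %% 2 = 1 -> compat (maxn a (minn (2*i) m.+1)) (maxn a (minn (2*i) m)).
Proof. rewrite /compat; lia. Qed.
Lemma step_max a a' i m : dstep a a' -> dstep (maxn a (minn (2*i) m)) (maxn a' (minn (2*i.+1) m)).
Proof. rewrite /dstep; lia. Qed.

Definition symle (x y : sym) := (x == y) || (is_bit x && (y == SX)).

Lemma symle_refl x : symle x x.
Proof. by rewrite /symle eqxx. Qed.
Lemma symle_trans x y z : symle x y -> symle y z -> symle x z.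
Proof. by case: x; case: y; case: z. Qed.
Lemma symle_anti x y : symle x y -> symle y x -> x = y.
Proof. by case: x; case: y. Qed.

Definition flip (a : sym) := match a with S0 => S1 | S1 => S0 | SX => SX end.

Lemma bits_neq y z : is_bit y -> is_bit z -> y != z -> y = flip z.
Proof. by case: y; case: z. Qed.

Section Comb.
Variables (N M : nat) (b : sym).
Hypotheses (bbit : b != SX) (M0 : 0 < M) (MN : 2*M < N).

Lemma Npos_ : 0 < N. Proof. lia. Qed.
Lemma flip_neq : flip b != b.
Proof. by case: b bbit. Qed.
Lemma flip_bit : flip b != SX.
Proof. by case: b bbit. Qed.

Definition symv (v : nat) : sym := if v %% 2 == 1 then SX else if v %% 4 == 0 then b else flip b.

Lemma symv_b v : (symv v == b) = (v %% 4 == 0).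
Proof. rewrite /symv; case: b bbit => // _; (case: ifP => h1; [|case: ifP => h2]); rewrite /=; fin. Qed.
Lemma symv_fb v : (symv v == flip b) = (v %% 4 == 2).
Proof. rewrite /symv; case: b bbit => // _; (case: ifP => h1; [|case: ifP => h2]); rewrite /=; fin. Qed.
Lemma symv_X v : (symv v == SX) = (v %% 2 == 1).
Proof. rewrite /symv; case: b bbit => // _; (case: ifP => h1; [|case: ifP => h2]); rewrite /=; fin. Qed.

Lemma symvE0 v : v %% 4 = 0 -> symv v = b.
Proof. by move=> h; apply/eqP; rewrite symv_b h. Qed.
Lemma symvE2 v : v %% 4 = 2 -> symv v = flip b.
Proof. by move=> h; apply/eqP; rewrite symv_fb h. Qed.
Lemma symvEX v : v %% 2 = 1 -> symv v = SX.
Proof. by move=> h; apply/eqP; rewrite symv_X h. Qed.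

Lemma symle_symv a c : symle (symv a) (symv c) = compat a c.
Proof.
rewrite /symle /compat.
case: (boolP (c %% 2 == 1)) => hc.
  rewrite (symvEX (eqP hc)) eqxx andbT.
  by case: (symv a).
rewrite /=; have -> : (symv c == SX) = false by rewrite symv_X; apply/negbTE.
rewrite andbF orbF.
case: (boolP (c %% 4 == 0)) => h0.
  rewrite (symvE0 (eqP h0)) symv_b; fin.
rewrite (@symvE2 c); last lia.
rewrite symv_fb; fin.
Qed.

Section Tup.
Variable s : N.-tuple sym.
Local Notation ns i := (nth SX s i).

Lemma cyc_small k : k < N -> cyc s k = ns k.
Proof. by move=> h; rewrite /cyc modn_small. Qed.

Lemma cyc_pred j : 0 < j < N -> cyc s (j + N - 1) = ns j.-1.
Proof.
move=> h; rewrite /cyc.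
have -> : j + N - 1 = j.-1 + N by lia.
by rewrite modnDr modn_small //; lia.
Qed.

Lemma cyc_pred0 : cyc s (0 + N - 1) = ns N.-1.
Proof. have -> : 0 + N - 1 = N.-1 by lia. by rewrite /cyc modn_small //; have := Npos_; lia. Qed.

Lemma cycDN k : cyc s (k + N) = cyc s k.
Proof. by rewrite /cyc modnDr. Qed.

Lemma nblocks_count a : ~~ all (fun c => c == a) s ->
  nblocks a s = ((ns 0 == a) && (ns N.-1 != a)) +
                 count (fun j => (ns j == a) && (ns j.-1 != a)) (iota 1 N.-1).
Proof.
move=> hna; rewrite /nblocks (negbTE hna) andbF.
have -> : iota 0 N = 0 :: iota 1 N.-1 by move: Npos_; case: (N).
rewrite /= cyc_small ?Npos_ // cyc_pred0; congr addn.
apply: eq_in_count => j; rewrite mem_iota => hj.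
rewrite cyc_small ?cyc_pred //; lia.
Qed.

End Tup.

Definition Vd (d : nat -> nat) := forall i, i.+1 < N -> dstep (d i) (d i.+1).
Definition Ends (bar : bool) (d : nat -> nat) :=
  if bar then [|| (d 0 == 0) && (d N.-1 == 4*M), (d 0 == 0) && (d N.-1 == (4*M).-1)
               | (d 0 == 1) && (d N.-1 == 4*M)]
  else (d 0 == 0) && (d N.-1 == 4*M).

Lemma mk_size d : size (map (fun i => symv (d i)) (iota 0 N)) == N.
Proof. by rewrite size_map size_iota. Qed.
Definition mk d : N.-tuple sym := Tuple (mk_size d).

Lemma nth_mk d i : i < N -> nth SX (mk d) i = symv (d i).
Proof. by move=> h; rewrite /= (nth_map 0) ?size_iota // nth_iota. Qed.

Lemma Vd_mono d : Vd d -> forall i j, i <= j -> j < N -> d i <= d j.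
Proof.
move=> V i j; elim: j => [|j IH] hij hj; first by have -> : i = 0 by lia.
case: (eqVneq i j.+1) => [->//|ne].
have := V j hj; rewrite /dstep => /andP[h _].
apply: leq_trans h; apply: IH; lia.
Qed.

Definition gfun (a : sym) v := if a == b then v %/ 4 else (v + 2) %/ 4.


Lemma arr_step a v v' : (a == b) || (a == flip b) -> dstep v v' ->
  ((symv v' == a) && (symv v != a) : nat) = gfun a v' - gfun a v.
Proof.
rewrite /gfun /dstep => /orP[/eqP->|/eqP->].
  rewrite eqxx !symv_b; case: (boolP (v' %% 4 == 0)); case: (boolP (v %% 4 == 0)) => /= *; lia.
rewrite (negbTE flip_neq) !symv_fb; case: (boolP (v' %% 4 == 2)); case: (boolP (v %% 4 == 2)) => /= *; lia.
Qed.

Lemma gfun_mono a v v' : v <= v' -> gfun a v <= gfun a v'.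
Proof. move=> h; rewrite /gfun; case: (a == b); lia. Qed.

Lemma count_arr d a : Vd d -> (a == b) || (a == flip b) -> forall n, n < N ->
  count (fun j => (symv (d j) == a) && (symv (d j.-1) != a)) (iota 1 n) = gfun a (d n) - gfun a (d 0).
Proof.
move=> V ha; elim=> [|n IH] hn; first by rewrite /= subnn.
have -> : iota 1 n.+1 = iota 1 n ++ [:: n.+1] by rewrite -(addn1 n) iotaD /= addnC.
rewrite count_cat IH; last lia.
rewrite /= addn0 (arr_step ha (V n hn)).
have h1 := gfun_mono a (Vd_mono V (leq0n n) (ltnW hn)).
have h2 : gfun a (d n) <= gfun a (d n.+1) by apply: gfun_mono; have := V n hn; rewrite /dstep; lia.
lia.
Qed.

Lemma mk_first d : sfirst (mk d) = symv (d 0).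
Proof. by rewrite /sfirst nth_mk ?Npos_. Qed.
Lemma mk_last d : slast (mk d) = symv (d N.-1).
Proof. by rewrite /slast nth_mk //; have := Npos_; lia. Qed.

Lemma mk_nblocks bar d a : Vd d -> Ends bar d -> (a == b) || (a == flip b) -> nblocks a (mk d) = M.
Proof.
move=> V E ha.
have hN : N.-1 < N by have := Npos_; lia.
have cnt := count_arr V ha hN.
have cntf := count_arr V (introT orP (or_intror (eqxx (flip b)))) hN.
have hnth j : j < N -> nth SX (mk d) j = symv (d j) by exact: nth_mk.
have e0 : d 0 <= 1 by move: E; rewrite /Ends; case: bar; lia.
have eN : (4*M).-1 <= d N.-1 by move: E; rewrite /Ends; case: bar; lia.
have notall : ~~ all (fun c => c == a) (mk d).
  apply/negP => /all_nthP Hall.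
  case/orP: ha => /eqP ha; subst a.
    have /hasP [j hj /andP [hj1 _]] :
      has (fun j => (symv (d j) == flip b) && (symv (d j.-1) != flip b)) (iota 1 N.-1).
      by rewrite has_count cntf /gfun (negbTE flip_neq); lia.
    move: hj; rewrite mem_iota => hj.
    have := Hall SX j; rewrite size_tuple hnth; last lia.
    move=> /(_ ltac:(lia)) /eqP hb; move: hj1; rewrite hb.
    by rewrite eq_sym (negbTE flip_neq).
  have := Hall SX 0; rewrite size_tuple hnth ?Npos_ // => /(_ isT).
  rewrite symv_fb; lia.
rewrite nblocks_count //.
rewrite (@eq_in_count _ _ (fun j => (symv (d j) == a) && (symv (d j.-1) != a))); last first.
  by move=> j; rewrite mem_iota => hj; rewrite !hnth //; lia.
rewrite cnt !hnth ?Npos_ //.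
move: E; rewrite /Ends /gfun; case/orP: ha => /eqP ->.
  by rewrite eqxx !symv_b; case: bar; lia.
by rewrite (negbTE flip_neq) !symv_fb; case: bar; lia.
Qed.

Definition Fd (d : nat -> nat) k := d (k %% N) + 4 * (M * (k %/ N)).

Lemma symv_add4 v k : symv (v + 4 * k) = symv v.
Proof.
rewrite /symv.
have -> : (v + 4 * k) %% 2 == 1 = (v %% 2 == 1) by apply/eqP/eqP; lia.
by have -> : (v + 4 * k) %% 4 == 0 = (v %% 4 == 0) by apply/eqP/eqP; lia.
Qed.

Lemma cycF d k : cyc (mk d) k = symv (Fd d k).
Proof. by rewrite /cyc /Fd symv_add4 nth_mk // ltn_pmod // Npos_. Qed.

Lemma stepF bar d k : Vd d -> Ends bar d -> dstep (Fd d k) (Fd d k.+1).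
Proof.
move=> V E; rewrite /Fd.
have hr := ltn_pmod k Npos_.
case: (ltnP (k %% N).+1 N) => h.
  have e1 : k.+1 %% N = (k %% N).+1.
    by rewrite -addn1 -modnDml addn1 modn_small.
  have e2 : k.+1 %/ N = k %/ N.
    by rewrite divnS ?Npos_ // /dvdn e1; have -> : ((k %% N).+1 == 0) = false by [].
  rewrite e1 e2; have := V _ h; rewrite /dstep; lia.
have hk : k %% N = N.-1 by lia.
have e1 : k.+1 %% N = 0.
  by rewrite -addn1 -modnDml hk addn1 prednK ?Npos_ // modnn.
have e2 : k.+1 %/ N = (k %/ N).+1.
  by rewrite divnS ?Npos_ // /dvdn e1.
rewrite e1 e2 hk; move: E; rewrite /Ends /dstep.
set q := k %/ N; case: bar; lia.
Qed.

Lemma run_lemma (F : nat -> nat) l len : (forall k, dstep (F k) (F k.+1)) ->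
  symv (F l) != SX -> (forall k, k < len -> symv (F (l + k.+1)) = SX) ->
  symv (F (l + len.+1)) != SX -> 0 < len -> symv (F l) != symv (F (l + len.+1)).
Proof.
move=> St h0 hX hl lpos.
rewrite symv_X in h0.
have run : forall k, k < len -> F (l + k.+1) = (F l).+1.
  elim=> [|k IH] hk.
    have := hX 0 hk; move/eqP; rewrite symv_X addn1 => h1.
    by have := St l; rewrite /dstep; lia.
  have := hX _ hk; move/eqP; rewrite symv_X => h1.
  have := IH (ltnW hk); have := St (l + k.+1); rewrite /dstep -addnS; lia.
have := run len.-1 ltac:(lia); rewrite prednK // => hlast.
have := St (l + len); rewrite -addnS /dstep hlast; rewrite symv_X in hl.
move=> hs.
have hF : F (l + len.+1) = (F l).+2 by lia.
rewrite hF.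
case: (boolP (F l %% 4 == 0)) => h4.
  rewrite (symvE0 (eqP h4)) (@symvE2 (F l).+2); last lia.
  by rewrite eq_sym flip_neq.
rewrite (@symvE2 (F l)) ?(@symvE0 (F l).+2); try lia.
exact: flip_neq.
Qed.

Lemma mk_xok bar d : Vd d -> Ends bar d -> xblocks_ok (mk d).
Proof.
move=> V E; rewrite /xblocks_ok; apply/andP; split.
  apply/hasP.
  move: E; rewrite /Ends => E.
  have [k [hk hb]] : exists k, k < N /\ d k %% 4 = 0.
    case: bar E => E.
      case/or3P: E => /andP [/eqP h1 /eqP h2].
      - by exists 0; rewrite h1 Npos_.
      - by exists 0; rewrite h1 Npos_.
      - exists N.-1; rewrite h2; split; last lia.
        by have := Npos_; lia.
    by case/andP: E => /eqP h1 _; exists 0; rewrite h1 Npos_.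
  exists (nth SX (mk d) k); first by rewrite mem_nth // size_tuple.
  by rewrite nth_mk // (symvE0 hb).
apply/allP => i; rewrite mem_iota => dhi.
apply/allP => len; rewrite mem_iota => hlen.
apply/implyP => /and3P [h1 /allP h2 h3].
have St := fun k => stepF k V E.
have eN : i + N - 1 = i + N.-1 by have := Npos_; lia.
have X1 : cyc (mk d) (i + len) = symv (Fd d (i + N.-1 + len.+1)).
  rewrite -cycF; have -> : i + N.-1 + len.+1 = i + len + N by have := Npos_; lia.
  by rewrite cycDN.
rewrite X1 eN cycF; rewrite eN cycF in h1; rewrite X1 in h3.
apply: run_lemma => //; last lia.
move=> k hk; have := h2 k; rewrite mem_iota add0n => /(_ hk) /eqP <-.
rewrite -cycF; have -> : i + N.-1 + k.+1 = i + k + N by have := Npos_; lia.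
by rewrite cycDN.
Qed.

Definition Qb (bar : bool) (s : N.-tuple sym) : bool :=
  if bar then is_Str M s && ((sfirst s, slast s) \in [:: (b, b); (b, SX); (SX, b)])
  else [&& is_Str M s, sfirst s == b & slast s == b].

Lemma mk_Q bar d : Vd d -> Ends bar d -> Qb bar (mk d).
Proof.
move=> V E.
have nb a : (a == b) || (a == flip b) -> nblocks a (mk d) == M.
  by move=> ha; rewrite (mk_nblocks V E ha).
have hS : is_Str M (mk d).
  rewrite /is_Str (mk_xok V E) andbT.
  by case: b bbit nb => // _ nb; rewrite !nb.
have s0 : symv 0 = b by rewrite symvE0.
have s1 : symv 1 = SX by rewrite symvEX.
have s4 : symv (4 * M) = b by rewrite symvE0 //; lia.
have s4' : symv (4 * M).-1 = SX by rewrite symvEX //; lia.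
rewrite /Qb hS mk_first mk_last; move: E; rewrite /Ends.
case: bar => [|/andP [/eqP -> /eqP ->]]; last by rewrite s0 s4 !eqxx.
case/or3P => /andP [/eqP -> /eqP ->]; rewrite ?s0 ?s1 ?s4 ?s4' !inE ?eqxx ?orbT //=.
Qed.

Definition Pst (s : seq sym) j := is_bit (nth SX s j) && (nth SX s j.-1 != nth SX s j).
Definition Cnt s i := count (Pst s) (iota 1 i).
Definition dfun (s : seq sym) i := 2 * Cnt s i + (nth SX s i == SX).

Lemma Cnt_S s i : Cnt s i.+1 = Cnt s i + Pst s i.+1.
Proof.
rewrite /Cnt; have -> : iota 1 i.+1 = iota 1 i ++ [:: i.+1] by rewrite -(addn1 i) iotaD /= addnC.
by rewrite count_cat /= addn0.
Qed.

Lemma dfun_step s i : dstep (dfun s i) (dfun s i.+1).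
Proof.
rewrite /dfun Cnt_S /Pst /=; move: (Cnt s i) (nth SX s i) (nth SX s i.+1) => c x y.
by case: x; case: y; rewrite /is_bit /dstep ?eqxx ?sym_neq /=; lia.
Qed.

Lemma count_split (P P1 P2 : pred nat) l : (forall x, P x = P1 x || P2 x) ->
  (forall x, ~~ (P1 x && P2 x)) -> count P l = count P1 l + count P2 l.
Proof.
move=> hP hd; elim: l => [//|x l IH] /=; rewrite IH hP.
by move: (hd x); case: (P1 x); case: (P2 x) => //=; lia.
Qed.

Definition bitof c := if odd c then flip b else b.

Lemma symv_2 c : symv (2 * c) = bitof c.
Proof.
rewrite /symv /bitof.
have -> : (2 * c) %% 2 == 1 = false by apply/negbTE/eqP; lia.
case: (boolP (odd c)) => h; have h' := modn2 c; rewrite ?(negbTE h) ?h /= in h'.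
  by have -> : (2 * c) %% 4 == 0 = false by apply/negbTE/eqP; lia.
by have -> : (2 * c) %% 4 == 0 = true by apply/eqP; lia.
Qed.

Lemma flipK x : flip (flip x) = x. Proof. by case: x. Qed.
Lemma bitofS c : bitof c.+1 = flip (bitof c).
Proof. by rewrite /bitof /=; case: (odd c) => //=; rewrite flipK. Qed.

Section QProps.
Variable bar : bool.
Variable s : N.-tuple sym.
Hypothesis Qs : Qb bar s.
Local Notation ns i := (nth SX s i).

Lemma Q_parts : [/\ is_Str M s, (ns 0 == b) || (bar && (ns 0 == SX)),
  (ns N.-1 == b) || (bar && (ns N.-1 == SX)) & ~~ ((ns 0 == SX) && (ns N.-1 == SX))].
Proof.
move: Qs; rewrite /Qb /sfirst /slast; case: bar.
  case/andP => hS; rewrite !inE !xpair_eqE.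
  by case/or3P => /andP [/eqP -> /eqP ->]; rewrite hS ?eqxx ?orbT ?(negbTE bbit).
case/and3P => hS /eqP -> /eqP ->; by rewrite hS eqxx (negbTE bbit).
Qed.

Lemma Q_nb a : (a == b) || (a == flip b) -> nblocks a s = M.
Proof.
case: Q_parts => /and3P [h0 h1 _] _ _ _.
by case: b bbit => // _ /orP [] /eqP ->; apply/eqP.
Qed.

Lemma Q_xok : xblocks_ok s.
Proof. by case: Q_parts => /and3P []. Qed.

Lemma Q_notall a : (a == b) || (a == flip b) -> ~~ all (fun c => c == a) s.
Proof.
case: Q_parts => _ h0 _ _.
have s0 : ns 0 != flip b.
  case/orP: h0 => [/eqP ->|/andP [_ /eqP ->]]; [by rewrite eq_sym flip_neq | by rewrite eq_sym flip_bit].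
have hN : N.-1 < N by have := Npos_; lia.
case/orP => /eqP ->; apply/negP => /all_nthP Hall.
  have nf : ~~ all (fun c => c == flip b) s.
    apply/negP => /(all_nthP SX) /(_ 0); rewrite size_tuple => /(_ Npos_).
    by rewrite (negbTE s0).
  have := Q_nb (introT orP (or_intror (eqxx (flip b)))).
  rewrite nblocks_count //.
  have hb j : j < N -> ns j == b by move=> hj; apply: Hall; rewrite size_tuple.
  have -> : (ns 0 == flip b) = false by apply/negbTE.
  have -> : count (fun j => (ns j == flip b) && (ns j.-1 != flip b)) (iota 1 N.-1) = 0.
    apply/eqP; rewrite eqn0Ngt -has_count; apply/hasPn => j; rewrite mem_iota => hj.
    rewrite (eqP (hb j _)); last lia.
    by rewrite eq_sym (negbTE flip_neq).
  lia.
have := Hall SX 0; rewrite size_tuple => /(_ Npos_) h.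
by move: s0; rewrite h.
Qed.

Lemma Q_Cnt : Cnt s N.-1 = (M - ((ns 0 == b) && (ns N.-1 != b))) + M.
Proof.
case: Q_parts => _ h0 _ _.
have s0 : (ns 0 == flip b) = false.
  apply/negbTE; case/orP: h0 => [/eqP ->|/andP [_ /eqP ->]]; [by rewrite eq_sym flip_neq | by rewrite eq_sym flip_bit].
rewrite /Cnt (@count_split _ (fun j => (ns j == b) && (ns j.-1 != b))
                              (fun j => (ns j == flip b) && (ns j.-1 != flip b))).
- have ha := Q_nb (introT orP (or_introl (eqxx b))).
  have hf := Q_nb (introT orP (or_intror (eqxx (flip b)))).
  rewrite nblocks_count in ha; last by apply: Q_notall; rewrite eqxx.
  rewrite nblocks_count in hf; last by apply: Q_notall; rewrite eqxx orbT.
  rewrite s0 /= in hf; lia.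
- move=> j; rewrite /Pst; move: (ns j) (ns j.-1) => x y.
  by case: b bbit => // _; case: x; case: y.
- move=> j; move: (ns j) (ns j.-1) => x y.
  by case: b bbit => // _; case: x; case: y.
Qed.

Lemma Q_Vd : Vd (dfun s).
Proof. by move=> i _; exact: dfun_step. Qed.

Lemma Q_Ends : Ends bar (dfun s).
Proof.
case: Q_parts => _ h0 h1 h2.
have hN := Q_Cnt.
rewrite /Ends /dfun hN /Cnt /=.
move: h0 h1 h2; move: (ns 0) (ns N.-1) => x y.
case: bar; case: b bbit => // _; case: x; case: y; rewrite ?sym_neq ?eqxx //=; lia.
Qed.

Fixpoint lb i := if i is i'.+1 then (if is_bit (ns i'.+1) then ns i'.+1 else lb i') else b.
Local Notation pb l := (cyc s (l + N - 1)).

Definition Inv i := [/\ lb i = bitof (Cnt s i), (is_bit (ns i) -> ns i = lb i) &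
  (ns i = SX -> exists l, [/\ l <= i, (forall k, l <= k <= i -> ns k = SX),
                             is_bit (pb l) & pb l = lb i])].

Lemma inv_all i : i < N -> Inv i.
Proof.
case: Q_parts => _ h0 h1 h2.
elim: i => [|i IH] dhi.
  split => //.
    by case/orP: h0 => [/eqP ->|/andP [_ /eqP ->]].
  move=> hX; exists 0; split => //.
  - by move=> k hk; have -> : k = 0 by clear -hk; lia.
  - rewrite cyc_pred0; move: h1 h2; rewrite hX eqxx /=.
    by case/orP => [/eqP ->|/andP [_ /eqP ->]] //; rewrite eqxx.
  - rewrite cyc_pred0; move: h1 h2; rewrite hX eqxx /=.
    by case/orP => [/eqP ->|/andP [_ /eqP ->]] //; rewrite eqxx.
have [IH1 IH2 IH3] := IH (ltnW dhi).
have lbS : lb i.+1 = if is_bit (ns i.+1) then ns i.+1 else lb i by [].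
case: (eqVneq (ns i.+1) SX) => hX.
  have hP : Pst s i.+1 = false by rewrite /Pst hX.
  rewrite /Inv lbS Cnt_S hP addn0 hX /=; split => // _.
  case: (eqVneq (ns i) SX) => hXi.
    have [l [l1 l2 l3 l4]] := IH3 hXi.
    exists l; split => //; first exact: leqW.
    move=> k hk; case: (eqVneq k i.+1) => [->//|ne]; apply: l2; clear -hk ne; lia.
  exists i.+1; split => //.
  - by move=> k hk; have -> : k = i.+1 by clear -hk; lia.
  - by rewrite cyc_pred /=; [exact: hXi | clear -dhi; lia].
  - rewrite cyc_pred /=; last by clear -dhi; lia.
    by apply: IH2.
have hb : is_bit (ns i.+1) by [].
rewrite /Inv lbS hb; split => //; last by move=> e; move: hX; rewrite e eqxx.
rewrite Cnt_S /Pst hb /=.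
case: (eqVneq (ns i) (ns i.+1)) => he /=.
  by rewrite addn0 -IH1 -IH2 he.
rewrite addn1 bitofS -IH1.
case: (eqVneq (ns i) SX) => hXi.
  have [l [l1 l2 l3 l4]] := IH3 hXi.
  have := Q_xok; case/andP => _ /allP /(_ l) hl.
  have : l \in iota 0 N by rewrite mem_iota; clear -l1 dhi; lia.
  move/hl => /allP /(_ (i.+1 - l)) hlen.
  have : i.+1 - l \in iota 1 N by rewrite mem_iota; clear -l1 dhi; lia.
  move/hlen => /implyP hxb.
  have hc : cyc s (l + (i.+1 - l)) = ns i.+1.
    have -> : l + (i.+1 - l) = i.+1 by clear -l1; lia.
    by rewrite cyc_small.
  have : xblock s l (i.+1 - l).
    apply/and3P; split; [exact: l3 | | by rewrite hc].
    apply/allP => k; rewrite mem_iota => hk.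
    by rewrite cyc_small ?l2 //; clear -hk l1 dhi; lia.
  move/hxb; rewrite hc l4 => hne.
  by apply: (bits_neq hb); [rewrite -l4 | rewrite eq_sym].
have hbi : is_bit (ns i) by [].
rewrite -(IH2 hbi) (bits_neq hb hbi) ?flipK //.
by rewrite eq_sym.
Qed.

Lemma Q_sym i : i < N -> ns i = symv (dfun s i).
Proof.
move=> dhi; have [I1 I2 _] := inv_all dhi.
rewrite /dfun; case: (eqVneq (ns i) SX) => hX.
  by rewrite hX /= symvEX //; lia.
by rewrite addn0 symv_2 (I2 hX) I1.
Qed.

End QProps.

Lemma str_leP (p q : N.-tuple sym) : str_le p q -> forall i, i < N -> symle (nth SX p i) (nth SX q i).
Proof.
move=> /forallP H i dhi; have := H (Ordinal dhi).
by rewrite !(tnth_nth SX).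
Qed.

Lemma str_leI (p q : N.-tuple sym) : (forall i, i < N -> symle (nth SX p i) (nth SX q i)) -> str_le p q.
Proof.
move=> H; apply/forallP => i; have := H i (ltn_ord i).
by rewrite !(tnth_nth SX).
Qed.

Lemma Ends_bounds bar d : Ends bar d -> d 0 <= 1 /\ (4*M).-1 <= d N.-1 <= 4*M.
Proof. rewrite /Ends; case: bar; lia. Qed.

Lemma Q_rel bar p q : Qb bar p -> Qb bar q -> str_le p q ->
  forall i, i < N -> drel (dfun p i) (dfun q i).
Proof.
move=> Qp Qq hle.
have cmp i : i < N -> compat (dfun p i) (dfun q i).
  move=> dhi; rewrite -symle_symv -(Q_sym Qp dhi) -(Q_sym Qq dhi).
  exact: str_leP.
have [ep1 ep2] := Ends_bounds (Q_Ends Qp).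
have [eq1 eq2] := Ends_bounds (Q_Ends Qq).
have hlo : forall i, i < N -> dlo (dfun p i) (dfun q i).
  elim=> [|i IH] dhi; first by rewrite /dlo; lia.
  apply: (step_lo (dfun_step p i) (dfun_step q i) (cmp _ dhi)); apply: IH; lia.
have hhi : forall k, k < N -> dhi (dfun p (N.-1 - k)) (dfun q (N.-1 - k)).
  elim=> [|k IH] hk.
    by rewrite subn0 /dhi; lia.
  have e : (N.-1 - k) = (N.-1 - k.+1).+1 by lia.
  have hi1 : N.-1 - k.+1 < N by lia.
  apply: (step_hi (dfun_step p _) (dfun_step q _) (cmp _ hi1)).
  by rewrite -e; apply: IH; lia.
move=> i dhi; apply: lohi_rel; [exact: hlo | | exact: cmp].
have e : i = N.-1 - (N.-1 - i) by lia.
by rewrite e; apply: hhi; lia.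
Qed.

Definition Hm m (s : N.-tuple sym) : N.-tuple sym := mk (fun i => maxn (dfun s i) (minn (2*i) m)).

Lemma Hm_Q bar m s : m <= 4*M -> Qb bar s -> Qb bar (Hm m s).
Proof.
move=> hm Qs; apply: mk_Q.
  by move=> i _; apply: step_max; exact: dfun_step.
have := Q_Ends Qs; rewrite /Ends.
have hN : 4 * M <= 2 * N.-1 by lia.
case: bar {Qs}; lia.
Qed.

Lemma Hm_mono bar m p q : Qb bar p -> Qb bar q -> str_le p q -> str_le (Hm m p) (Hm m q).
Proof.
move=> Qp Qq hle; apply: str_leI => i dhi.
rewrite !nth_mk // symle_symv; exact: (rel_max _ (Q_rel Qp Qq hle dhi)).
Qed.

Lemma Hm_even m s : m %% 2 = 0 -> str_le (Hm m s) (Hm m.+1 s).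
Proof. by move=> hm; apply: str_leI => i dhi; rewrite !nth_mk // symle_symv cmp_even. Qed.

Lemma Hm_odd m s : m %% 2 = 1 -> str_le (Hm m.+1 s) (Hm m s).
Proof. by move=> hm; apply: str_leI => i dhi; rewrite !nth_mk // symle_symv cmp_odd. Qed.

Lemma Hm0 bar s : Qb bar s -> Hm 0 s = s.
Proof.
move=> Qs; apply: eq_from_tnth => i; rewrite !(tnth_nth SX) nth_mk // (Q_sym Qs) //; congr symv; lia.
Qed.

Definition Kc : N.-tuple sym := mk (fun i => minn (2*i) (4*M)).

Lemma Kc_Q bar : Qb bar Kc.
Proof.
apply: mk_Q; first by move=> i _; rewrite /dstep; lia.
by rewrite /Ends; case: bar; lia.
Qed.

Lemma Kc_le bar s : Qb bar s -> str_le Kc (Hm (4*M) s).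
Proof.
move=> Qs; apply: str_leI => i dhi; rewrite !nth_mk // symle_symv.
have V : Vd (dfun s) := fun i _ => dfun_step s i.
have [e1 e2] := Ends_bounds (Q_Ends Qs).
have hle : dfun s i <= 4 * M.
  have := Vd_mono V (j := N.-1) (i := i); lia.
have h2 : forall j, 0 < j -> j < N -> dfun s j <= 2 * j.
  elim=> [//|j IH] _ hj.
  have := V j hj; rewrite /dstep.
  case: (posnP j) => [->|jp]; first lia.
  have := IH jp (ltnW hj); lia.
case: (posnP i) => [->|ip]; first by rewrite /compat; lia.
have := h2 i ip dhi; rewrite /compat; lia.
Qed.

End Comb.

Lemma str_le_refl N (p : N.-tuple sym) : str_le p p.
Proof. by apply/forallP => i; rewrite eqxx. Qed.

Lemma str_le_trans N (p q r : N.-tuple sym) : str_le p q -> str_le q r -> str_le p r.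
Proof.
move=> /forallP h1 /forallP h2; apply/forallP => i.
exact: (symle_trans (h1 i) (h2 i)).
Qed.

Lemma str_le_anti N (p q : N.-tuple sym) : str_le p q -> str_le q p -> p = q.
Proof.
move=> /forallP h1 /forallP h2; apply: eq_from_tnth => i.
exact: (symle_anti (h1 i) (h2 i)).
Qed.

End CombM.
Import CombM.

Module TopoM.
Local Open Scope classical_set_scope.
Local Open Scope ring_scope.

Section Topo.
Variables (R : realType) (T : finType).
Local Notation X := (prod_topology (fun _ : T => (R : topologicalType))).
Definition Z : topologicalType := (X * R)%type.

Lemma ptws_cvg (F : set_system X) (f : X) :
  Filter F -> (forall t, (fun g : X => g t) @ F --> f t) -> F --> f.
Proof.
move=> FF H.
apply/cvg_sup => i.
rewrite cvg_image; last by rewrite eqEsubset; split=> v // _; exists (fun _ => v).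
move=> W /H; rewrite /= nbhs_simpl => HW.
exists (fun g => W (g i)) => //.
rewrite eqEsubset; split=> v; first by case=> g Wg <-.
by move=> Wv; exists (fun _ => v).
Qed.

Lemma ptws_continuous (H : Z -> X) :
  (forall u, continuous (fun z => H z u)) -> continuous H.
Proof. move=> Hc z; apply: (@ptws_cvg (H @ nbhs z) (H z) _) => u; exact: (Hc u z). Qed.

Lemma cts_fst : continuous (fst : Z -> X).
Proof. case=> x s; exact: (@cvg_fst X R (nbhs x) (nbhs s) _). Qed.
Lemma cts_snd : continuous (snd : Z -> R).
Proof. case=> x s; exact: (@cvg_snd X R (nbhs x) (nbhs s) _). Qed.

Lemma cts_cst (c : R) : continuous (fun _ : Z => c).
Proof. exact: cst_continuous. Qed.

Lemma cts_coord t : continuous (fun z : Z => z.1 t).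
Proof.
move=> z.
apply: (@continuous_comp Z X R fst (fun x : X => x t)); first exact: cts_fst.
exact: (@proj_continuous T (fun _ : T => (R : topologicalType)) t).
Qed.

Lemma cts_add (f g : Z -> R) : continuous f -> continuous g -> continuous (fun z => f z + g z).
Proof. by move=> cf cg z; exact: (@continuousD R R^o Z f g z (cf z) (cg z)). Qed.

Lemma cts_sub (f g : Z -> R) : continuous f -> continuous g -> continuous (fun z => f z - g z).
Proof. by move=> cf cg z; exact: (@continuousB R R^o Z f g z (cf z) (cg z)). Qed.

Lemma cts_mul (f g : Z -> R) : continuous f -> continuous g -> continuous (fun z => f z * g z).
Proof. by move=> cf cg z; exact: (@continuousM R Z f g z (cf z) (cg z)). Qed.

Lemma cts_min (f g : Z -> R) : continuous f -> continuous g -> continuous (fun z => Num.min (f z) (g z)).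
Proof. by move=> cf cg z; exact: (@continuous_min R Z f g z (cf z) (cg z)). Qed.

Lemma cts_max (f g : Z -> R) : continuous f -> continuous g -> continuous (fun z => Num.max (f z) (g z)).
Proof. by move=> cf cg z; exact: (@continuous_max R Z f g z (cf z) (cg z)). Qed.

Lemma cts_sum (I : Type) (r : seq I) (P : pred I) (F : I -> Z -> R) :
  (forall i, continuous (F i)) -> continuous (fun z => \sum_(i <- r | P i) F i z).
Proof.
move=> cF; elim: r => [|i r IH].
  by under eq_fun do rewrite big_nil; exact: cts_cst.
under eq_fun do rewrite big_cons.
case: (P i) => //; exact: cts_add.
Qed.

Lemma cts_comp (G : Z -> X) (H : Z -> X) (s : Z -> R) :
  continuous G -> continuous s -> continuous H -> continuous (fun z => H (G z, s z)).
Proof.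
move=> cG cs cH z.
apply: (@continuous_comp Z Z X (fun z => (G z, s z)) H); last exact: cH.
exact: (@cvg_pair _ _ _ (nbhs z) (nbhs (G z)) (nbhs (s z)) _ _ _ G s (cG z) (cs z)).
Qed.

End Topo.

End TopoM.
Import TopoM.

Module HomM.
Local Open Scope classical_set_scope.
Local Open Scope ring_scope.

Section Hom.
Variables (R : realType) (T : finType).
Local Notation X := (prod_topology (fun _ : T => (R : topologicalType))).
Local Notation Z := (Z R T).

Definition homot (A : set X) (F G : X -> X) :=
  exists H : Z -> X, continuous H /\
    (forall x t, A x -> 0 <= t <= 1 -> A (H (x, t))) /\
    (forall x, A x -> H (x, 0) = F x /\ H (x, 1) = G x).

Lemma cts_projX (H : Z -> X) u : continuous H -> continuous (fun z => H z u).
Proof.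
move=> cH z.
apply: (@continuous_comp Z X R H (fun x : X => x u)); first exact: cH.
exact: (@proj_continuous T (fun _ : T => (R : topologicalType)) u).
Qed.

Lemma hom_sym A F G : homot A F G -> homot A G F.
Proof.
case=> H [cH [HA He]].
exists (fun z => H (z.1, 1 - z.2)); split.
  apply: (@cts_comp R T fst H (fun z => 1 - z.2)) => //; first exact: cts_fst.
  by apply: cts_sub; [exact: cts_cst|exact: cts_snd].
split.
  move=> x t Ax /andP[t0 t1]; apply: HA => //.
  by rewrite subr_ge0 t1 lerBlDr lerDl t0.
move=> x Ax; rewrite /= subr0 subrr; have [-> ->] := He x Ax; by [].
Qed.

Lemma hom_trans A F G K : homot A F G -> homot A G K -> homot A F K.
Proof.
case=> H1 [cH1 [HA1 He1]] [H2 [cH2 [HA2 He2]]].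
exists (fun z => fun u => H1 (z.1, Num.min 1 (2 * z.2)) u
                 + H2 (z.1, Num.max 0 (2 * z.2 - 1)) u - H1 (z.1, 1) u).
split.
  apply: ptws_continuous => u.
  have c1 : continuous (fun z : Z => Num.min 1 (2 * z.2)).
    apply: cts_min; first exact: cts_cst.
    by apply: cts_mul; [exact: cts_cst|exact: cts_snd].
  have c2 : continuous (fun z : Z => Num.max 0 (2 * z.2 - 1)).
    apply: cts_max; first exact: cts_cst.
    apply: cts_sub; last exact: cts_cst.
    by apply: cts_mul; [exact: cts_cst|exact: cts_snd].
  apply: cts_sub; first apply: cts_add.
  - apply: (cts_projX (fun z => H1 (z.1, Num.min 1 (2 * z.2))) u).
    exact: (@cts_comp R T fst H1 _ (@cts_fst R T) c1 cH1).
  - apply: (cts_projX (fun z => H2 (z.1, Num.max 0 (2 * z.2 - 1))) u).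
    exact: (@cts_comp R T fst H2 _ (@cts_fst R T) c2 cH2).
  - apply: (cts_projX (fun z => H1 (z.1, 1)) u).
    exact: (@cts_comp R T fst H1 _ (@cts_fst R T) (@cts_cst R T 1) cH1).
split.
  move=> x t Ax /andP[t0 t1].
  have [G1 _] := He1 x Ax; have [_ G2] := He1 x Ax.
  have [K1 _] := He2 x Ax.
  case: (lerP t (2^-1)) => th.
    have -> : Num.max 0 (2 * t - 1) = 0.
      apply/max_idPl; rewrite subr_le0.
      by rewrite -(ler_pM2l (x := 2^-1)) ?mulKf ?mulr1 ?invr_gt0 //.
    rewrite /= K1 G2.
    have -> : (fun u => H1 (x, Num.min 1 (2 * t)) u + G x u - G x u) = H1 (x, Num.min 1 (2 * t)).
      by apply: funext => u; rewrite addrK.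
    apply: HA1 => //; apply/andP; split; last by rewrite ge_min lexx.
    by rewrite le_min ler01 mulr_ge0.
  have -> : Num.min 1 (2 * t) = 1.
    apply/min_idPl.
    by rewrite -(ler_pM2l (x := 2^-1)) ?mulKf ?mulr1 ?invr_gt0 // ltW.
  rewrite /=.
  have -> : (fun u => H1 (x, 1) u + H2 (x, Num.max 0 (2 * t - 1)) u - H1 (x, 1) u) = H2 (x, Num.max 0 (2 * t - 1)).
    by apply: funext => u; rewrite addrC addKr.
  apply: HA2 => //; apply/andP; split; first by rewrite le_max lexx.
  rewrite ge_max ler01 /= lerBlDl.
  have : 2 * t <= 2 * 1 by rewrite ler_pM2l.
  lra.
move=> x Ax; have [G1 G2] := He1 x Ax; have [K1 K2] := He2 x Ax.
split; apply: funext => u /=.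
  rewrite mulr0 sub0r.
  have -> : Num.min 1 0 = 0 :> R by apply/min_idPr; rewrite ler01.
  have -> : Num.max 0 (-1) = 0 :> R by apply/max_idPl; rewrite lerN10.
  by rewrite G1 K1 G2 addrK.
rewrite mulr1.
have -> : Num.min 1 2 = 1 :> R by apply/min_idPl; rewrite ler1n.
have -> : Num.max 0 (2 - 1) = 1 :> R.
  by rewrite (_ : 2 - 1 = 1); [apply/max_idPr; rewrite ler01| rewrite -addrA subrr addr0 ].
by rewrite G2 K2 addrC addKr.
Qed.

End Hom.

End HomM.
Import HomM.

Module PushM.
Local Open Scope classical_set_scope.
Local Open Scope ring_scope.
Local Set Implicit Arguments.
Local Unset Strict Implicit.

Section Push.
Variables (R : realType) (T : finType).
Local Notation X := (prod_topology (fun _ : T => (R : topologicalType))).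
Local Notation Z := (Z R T).

Definition push (f : T -> T) (x : X) : X := fun u => \sum_t (if f t == u then x t else 0).

Lemma sum_if_eq (c : T) (a : T -> R) : \sum_u (if c == u then a u else 0) = a c.
Proof.
rewrite -big_mkcond /= (big_pred1 c) // => u /=; by rewrite eq_sym.
Qed.

Lemma sum_if_eq' (c : T) (a : T -> R) : \sum_u (if u == c then a u else 0) = a c.
Proof. rewrite -big_mkcond /= (big_pred1 c) //. Qed.

Lemma sum_neq0 (F : T -> R) : \sum_t F t != 0 -> exists t, F t != 0.
Proof.
move=> H; case: (boolP [exists t, F t != 0]) => [/existsP [t Ht]|]; first by exists t.
rewrite negb_exists => /forallP Hall; move/negP: H; case; apply/eqP.
by apply: big1 => t _; apply/eqP; have := Hall t; rewrite negbK.
Qed.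

Variables (Q : pred T) (le : rel T).
Hypothesis le_refl : forall a, le a a.
Hypothesis le_trans : forall a b c, le a b -> le b c -> le a c.
Hypothesis le_anti : forall a b, le a b -> le b a -> a = b.

Local Notation A := (@realization R T Q le).

Definition ltT a b := (a != b) && le a b.

Definition Bsum (x : X) t : R := \sum_(w | ltT w t) x w.
Definition kept (z : Z) t : R := Num.max 0 (Num.min (z.1 t) (1 - z.2 - Bsum z.1 t)).
Definition Hpush (g f : T -> T) (z : Z) : X := fun u =>
  \sum_t ((if g t == u then kept z t else 0) + (if f t == u then z.1 t - kept z t else 0)).

Lemma push_id x : push id x = x.
Proof. by apply: funext => u; rewrite /push sum_if_eq'. Qed.

Lemma Hpush_cts g f : continuous (Hpush g f).
Proof.
apply: ptws_continuous => u; apply: cts_sum => t.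
have ck : continuous (fun z : Z => kept z t).
  apply: cts_max; first exact: cts_cst.
  apply: cts_min; first exact: cts_coord.
  apply: cts_sub; first by apply: cts_sub; [exact: cts_cst|exact: cts_snd].
  by apply: cts_sum => w; exact: cts_coord.
apply: cts_add.
  by case: (g t == u) => //; exact: cts_cst.
case: (f t == u) => //; last exact: cts_cst.
by apply: cts_sub => //; exact: cts_coord.
Qed.

Section inA.
Variable x : X.
Hypothesis Ax : A x.

Lemma Ax_ge0 t : 0 <= x t. Proof. by case: Ax. Qed.
Lemma Ax_Q t : x t != 0 -> Q t.
Proof. case: Ax => _ [H _] xt; apply/negP => /negP /H; exact/eqP. Qed.
Lemma Ax_sum : \sum_t x t = 1. Proof. by case: Ax => _ [_ []]. Qed.
Lemma Ax_chain t u : x t != 0 -> x u != 0 -> le t u || le u t.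
Proof. by case: Ax => _ [_ [_ H]]; apply: H. Qed.

Lemma Bsum_ge0 t : 0 <= Bsum x t.
Proof. by apply: sumr_ge0 => w _; exact: Ax_ge0. Qed.

Lemma Bsum_le t : Bsum x t + x t <= 1.
Proof.
rewrite -Ax_sum (bigID (fun w => ltT w t)) /= lerD2l.
rewrite (bigD1 t) /=; last by rewrite /ltT eqxx.
rewrite lerDl; apply: sumr_ge0 => w _; exact: Ax_ge0.
Qed.

Lemma kept_ge0 z t : 0 <= kept z t.
Proof. by rewrite /kept le_max lexx. Qed.

Lemma kept_le s t : kept (x, s) t <= x t.
Proof. by rewrite /kept ge_max Ax_ge0 ge_min lexx. Qed.

Lemma Bsum_lt t t' : ltT t' t -> Bsum x t' + x t' <= Bsum x t.
Proof.
move=> ltt; rewrite /Bsum -(sum_if_eq' t' x) big_mkcond /= -big_split /=.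
rewrite [X in _ <= X]big_mkcond /=; apply: ler_sum => w _.
case: ifP => [lwt'|_].
  have -> : (w == t') = false by apply/negP => /eqP E; move: lwt'; rewrite E /ltT eqxx.
  rewrite addr0.
  have -> : ltT w t.
    move: lwt' ltt => /andP[nw lw] /andP[nt lt]; apply/andP; split; last exact: le_trans lw lt.
    apply/negP => /eqP E; subst w; move: nt.
    by rewrite (le_anti lt lw) eqxx.
  by [].
rewrite add0r; case: eqP => [->|_]; last by case: ifP => // _; exact: Ax_ge0.
by rewrite ltt.
Qed.
End inA.

Variables g f : T -> T.
Hypothesis gQ : forall t, Q t -> Q (g t).
Hypothesis fQ : forall t, Q t -> Q (f t).
Hypothesis g_mono : forall t t', Q t -> Q t' -> le t t' -> le (g t) (g t').
Hypothesis f_mono : forall t t', Q t -> Q t' -> le t t' -> le (f t) (f t').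
Hypothesis gf : forall t, Q t -> le (g t) (f t).

Lemma hom_push : @homot R T A (push g) (push f).
Proof.
exists (Hpush g f); split; first exact: Hpush_cts.
split; last first.
  move=> x Ax; split; apply: funext => u; rewrite /Hpush /push; apply: eq_bigr => t _.
    have -> : kept (x, 0) t = x t.
      rewrite /kept /= subr0; have := Bsum_le Ax t => hB.
      have -> : Num.min (x t) (1 - Bsum x t) = x t by apply/min_idPl; lra.
      by apply/max_idPr; exact: Ax_ge0.
    by rewrite subrr; case: (f t == u); rewrite addr0.
  have -> : kept (x, 1) t = 0.
    rewrite /kept /= subrr sub0r; have := Bsum_ge0 Ax t => hB.
    apply/max_idPl; rewrite ge_min; apply/orP; right; lra.
  by rewrite /= subr0; case: (g t == u); rewrite add0r.
move=> x s Ax /andP[s0 s1].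
have kle := kept_le Ax s.
have kx0 t : x t = 0 -> kept (x, s) t = 0.
  by move=> e; apply/eqP; rewrite eq_le kept_ge0 andbT -e kle.
split.
  move=> u; apply: sumr_ge0 => t _; apply: addr_ge0; case: ifP => // _.
    exact: kept_ge0.
  by rewrite subr_ge0.
split.
  move=> u Qu; apply: big1 => t _.
  have [xt0|xt0] := eqVneq (x t) 0.
    by rewrite /= kx0 // xt0 subrr; case: ifP; case: ifP; rewrite ?addr0.
  have Qt := Ax_Q Ax xt0.
  have -> : (g t == u) = false by apply/negP => /eqP E; move: Qu; rewrite -E gQ.
  have -> : (f t == u) = false by apply/negP => /eqP E; move: Qu; rewrite -E fQ.
  by rewrite addr0.
split.
  rewrite /Hpush exchange_big /= -(Ax_sum Ax); apply: eq_bigr => t _.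
  by rewrite big_split /= sum_if_eq sum_if_eq addrC subrK.
have keptP t : kept (x, s) t != 0 -> x t != 0 /\ 0 < 1 - s - Bsum x t.
  move=> kn; split; first by apply/negP => /eqP /kx0 e; move: kn; rewrite e eqxx.
  move: kn; rewrite /kept /=; case: (lerP (1 - s - Bsum x t) 0) => // h.
  by have -> : Num.max 0 (Num.min (x t) (1 - s - Bsum x t)) = 0;
    [apply/max_idPl; rewrite ge_min h orbT | rewrite eqxx].
have movedP t : x t - kept (x, s) t != 0 -> x t != 0 /\ 1 - s - Bsum x t < x t.
  move=> mn; split; first by apply/negP => /eqP e; move: mn; rewrite e kx0 // subrr eqxx.
  move: mn; rewrite /kept /=; case: (lerP (x t) (1 - s - Bsum x t)) => // h.
  have -> : Num.max 0 (x t) = x t by apply/max_idPr; exact: Ax_ge0.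
  by rewrite subrr eqxx.
have termP (u : T) (t : T) :
  (if g t == u then kept (x, s) t else 0) + (if f t == u then x t - kept (x, s) t else 0) != 0 ->
  (g t == u) && (kept (x, s) t != 0) \/ (f t == u) && (x t - kept (x, s) t != 0).
  case: (g t == u); case: (f t == u); rewrite ?addr0 ?add0r ?eqxx /=; try by [left|right].
  move=> h; case: (eqVneq (kept (x, s) t) 0) => [e|e]; last by left.
  by right; move: h; rewrite e add0r.
have cross t t' : kept (x, s) t != 0 -> x t' - kept (x, s) t' != 0 ->
    le (g t) (f t') || le (f t') (g t).
  move=> /keptP [xt ct] /movedP [xt' ct'].
  have Qt := Ax_Q Ax xt; have Qt' := Ax_Q Ax xt'.
  have [le1|le2] := orP (Ax_chain Ax xt xt').
    by rewrite (le_trans (g_mono Qt Qt' le1) (gf Qt')).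
  have [E|nE] := eqVneq t' t.
    by move: le2; rewrite E => le1; rewrite (le_trans (g_mono Qt Qt le1) (gf Qt)).
  have lt : ltT t' t by rewrite /ltT nE le2.
  have := Bsum_lt Ax lt => hB; exfalso; lra.
move=> u u' /sum_neq0 [t /termP Ht] /sum_neq0 [t' /termP Ht'].
have xtP t0 : kept (x, s) t0 != 0 \/ x t0 - kept (x, s) t0 != 0 -> x t0 != 0.
  by case=> [/keptP[]|/movedP[]].
case: Ht => /andP[/eqP <- k]; case: Ht' => /andP[/eqP <- k'].
- have xt := (keptP _ k).1; have xt' := (keptP _ k').1.
  have Qt := Ax_Q Ax xt; have Qt' := Ax_Q Ax xt'.
  by case/orP: (Ax_chain Ax xt xt') => h; [rewrite (g_mono Qt Qt' h) | rewrite (g_mono Qt' Qt h) orbT].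
- exact: cross.
- by rewrite orbC; apply: cross.
- have xt := (movedP _ k).1; have xt' := (movedP _ k').1.
  have Qt := Ax_Q Ax xt; have Qt' := Ax_Q Ax xt'.
  by case/orP: (Ax_chain Ax xt xt') => h; [rewrite (f_mono Qt Qt' h) | rewrite (f_mono Qt' Qt h) orbT].
Qed.

End Push.

End PushM.
Import PushM.

Module FinalM.
Local Open Scope classical_set_scope.
Local Open Scope ring_scope.
Local Set Implicit Arguments.
Local Unset Strict Implicit.

Section Final.
Variables (R : realType) (T : finType) (Q : pred T) (le : rel T).
Local Notation X := (prod_topology (fun _ : T => (R : topologicalType))).
Local Notation A := (@realization R T Q le).

Lemma homot_congr (F F' G G' : X -> X) :
  (forall x, A x -> F x = F' x) -> (forall x, A x -> G x = G' x) ->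
  @homot R T A F G -> @homot R T A F' G'.
Proof.
move=> eF eG [H [cH [HA He]]]; exists H; split => //; split => // x Ax.
by have [h1 h2] := He x Ax; rewrite -eF // -eG.
Qed.

Lemma push_eqQ (f g : T -> T) x : (forall t, Q t -> f t = g t) -> A x -> push f x = push g x.
Proof.
move=> efg Ax; apply: funext => u; rewrite /push; apply: eq_bigr => t _.
have [->|xt] := eqVneq (x t) 0; first by case: ifP; case: ifP.
by rewrite efg // (Ax_Q Ax xt).
Qed.

Lemma contractible_of (x0 : X) : A x0 -> @homot R T A id (fun _ => x0) -> contractible R A.
Proof.
move=> Ax0 [H [cH [HA He]]]; exists x0; split => //; exists H; split.
  exact: continuous_subspaceT.
by split.
Qed.
End Final.

Section Main.
Variables (R : realType) (N M : nat) (b : sym) (bar : bool).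
Hypotheses (bbit : b != SX) (M0 : (0 < M)%N) (MN : (2*M < N)%N).
Local Notation T := (N.-tuple sym).
Local Notation X := (prod_topology (fun _ : T => (R : topologicalType))).
Local Notation Q := (@Qb N M b bar).
Local Notation A := (@realization R T Q (@str_le N)).

Let c := Kc N M b.
Let Qc : Q c := Kc_Q bbit M0 MN bar.

Let trans := fun a b c => @str_le_trans N a b c.
Let anti := fun a b => @str_le_anti N a b.

Lemma HQ k : (k <= 4 * M)%N -> forall t, Q t -> Q (@Hm N b k t).
Proof. by move=> hk t Qt; exact: (Hm_Q bbit M0 MN hk Qt). Qed.
Lemma Hmono k : forall t t', Q t -> Q t' -> str_le t t' -> str_le (@Hm N b k t) (@Hm N b k t').
Proof. by move=> t t' Qt Qt' hle; exact: (Hm_mono bbit M0 MN _ Qt Qt' hle). Qed.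

Lemma hom_step (m : nat) : (m < 4 * M)%N ->
  @homot R T A (push (@Hm N b m)) (push (@Hm N b m.+1)).
Proof.
move=> hm.
case: (boolP (odd m)) => om.
  apply: hom_sym.
  apply: (@hom_push R T Q (@str_le N) trans anti _ _ (HQ hm) (HQ (ltnW hm)) (@Hmono _) (@Hmono _)).
  by move=> t _; apply: (Hm_odd bbit M0 MN); rewrite modn2 om.
apply: (@hom_push R T Q (@str_le N) trans anti _ _ (HQ (ltnW hm)) (HQ hm) (@Hmono _) (@Hmono _)).
by move=> t _; apply: (Hm_even bbit M0 MN); rewrite modn2 (negbTE om).
Qed.

Lemma hom_upto m : (m <= 4 * M)%N -> @homot R T A (push (@Hm N b 0)) (push (@Hm N b m)).
Proof.
elim: m => [_|m IH hm].
  apply: (@hom_push R T Q (@str_le N) trans anti _ _ (HQ (leq0n _)) (HQ (leq0n _)) (@Hmono _) (@Hmono _)).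
  by move=> t _; apply: str_le_refl.
exact: (@hom_trans R T A _ _ _ (IH (ltnW hm)) (hom_step hm)).
Qed.

Lemma main_contractible : contractible R A.
Proof.
pose x0 : X := fun u => if u == c then 1 else 0.
have Ax0 : A x0.
  split; first by move=> t; rewrite /x0; case: ifP.
  split; first by move=> t Qt; rewrite /x0; case: eqP => // e; move: Qt; rewrite e Qc.
  split; first by rewrite /x0 (sum_if_eq' c (fun _ => 1)).
  move=> t u; rewrite /x0; case: (eqVneq t c) => [-> _|_]; last by rewrite eqxx.
  case: (eqVneq u c) => [-> _|_]; last by rewrite eqxx.
  by rewrite str_le_refl.
apply: (contractible_of Ax0).
have h1 := hom_upto (leqnn (4 * M)).
have h2 : @homot R T A (push (fun _ => c)) (push (@Hm N b (4 * M))).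
  apply: (@hom_push R T Q (@str_le N) trans anti (fun _ => c) _ (fun _ _ => Qc) (HQ (leqnn _)) _ (@Hmono _)).
    by move=> t t' _ _ _; apply: str_le_refl.
  by move=> t Qt; exact: (Kc_le bbit M0 MN Qt).
have h := @hom_trans R T A _ _ _ h1 (@hom_sym R T A _ _ h2).
apply: homot_congr h.
  move=> x Ax; rewrite (push_eqQ (g := id) _ Ax) ?push_id //.
  by move=> t Qt; apply: (Hm0 bbit M0 MN Qt).
move=> x Ax; apply: funext => u; rewrite /push /x0.
case: (eqVneq u c) => [e|ne]; first exact: (Ax_sum Ax).
by rewrite big1 // => t _; rewrite eq_sym (negbTE ne).
Qed.

End Main.


End FinalM.
Import FinalM.

Theorem proposition5p5 (R : realType) (N M : nat) :
  (0 < M)%N -> (2 * M < N)%N ->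
  [/\ contractible R (@realization R _ (@Str00 N M) (@str_le N)),
      contractible R (@realization R _ (@Str00bar N M) (@str_le N)),
      contractible R (@realization R _ (@Str11 N M) (@str_le N))
    & contractible R (@realization R _ (@Str11bar N M) (@str_le N))].
Proof.
move=> M0 MN; split.
- exact: (@main_contractible R N M S0 false isT M0 MN).
- exact: (@main_contractible R N M S0 true isT M0 MN).
- exact: (@main_contractible R N M S1 false isT M0 MN).
- exact: (@main_contractible R N M S1 true isT M0 MN).
Qed.
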